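(* Let $G$ be a connected non-bipartite graph and $\phi$ a sub-additive admissible matching policy. Then every word $u\in\mathbb W_2$ admits an erasing word for $(G,\phi)$, i.e. there is $z\in\mathcal V^*$ of even length such that for all $\varsigma'\in\mathcal S^*$ with $|\varsigma'|=|z|$ and all $\varsigma\in\mathcal S^*$ with $|\varsigma|=|u|$, both having letters in the support of $\nu_\phi$, we have $Q_\phi(z,\varsigma')=\emptyset$ and $Q_\phi(uz,\varsigma\varsigma')=\emptyset$.
   Context: $G=(\mathcal V,\mathcal E)$ is a finite connected simple graph, $i - j$ denotes adjacency. A list of preferences $\sigma\in\mathcal S$ gives for each class $i$ a linear ordering of its neighbours; the policy $\phi$ comes with a probability $\nu_\phi$ on $\mathcal S$. $\mathbb W=\{w\in\mathcal V^*:|w|_i|w|_j=0 \text{ whenever } i - j\}$ and $\mathbb W_2$ is the set of words of $\mathbb W$ of even length. $\phi$ is admissible if there is a map $\odot_\phi:\mathbb W\times(\mathcal V\times\mathcal S)\to\mathbb W$ with $w\odot_\phi(v,\sigma)=wv$ if no letter of $w$ is adjacent to $v$, and otherwise $w$ with one letter adjacent to $v$ (chosen by $\phi$ as a function of $w,v,\sigma$) deleted. For $z=z_1\cdots z_k$, $\varsigma=\varsigma_1\cdots\varsigma_k$, $Q_\phi(z,\varsigma)=(\cdots(\emptyset\odot_\phi(z_1,\varsigma_1))\cdots)\odot_\phi(z_k,\varsigma_k)$. $\phi$ is sub-additive if $|Q_\phi(z'z'',\varsigma'\varsigma'')|\le|Q_\phi(z',\varsigma')|+|Q_\phi(z'',\varsigma'')|$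 for all words $z',z''$ and preference words $\varsigma',\varsigma''$ of matching lengths with letters in the support of $\nu_\phi$. *)

(* Defs.v *)
From Stdlib Require List.
From mathcomp Require Import all_boot.
Set Implicit Arguments. Unset Strict Implicit. Unset Printing Implicit Defensive.

Definition simple_graph (T : finType) (e : rel T) : Prop :=
  symmetric e /\ irreflexive e.

Definition connected_graph (T : finType) (e : rel T) : Prop :=
  forall x y : T, connect e x y.

Definition bipartite (T : finType) (e : rel T) : Prop :=
  exists c : T -> bool, forall x y, e x y -> c x != c y.

(* A list of preferences: for each class i, a linear ordering (a duplicate-free
   list) of exactly the neighbours of i. *)
Definition pref (T : Type) := T -> seq T.

Definition is_pref (T : finType) (e : rel T) (s : pref T) : Prop :=
  forall i, uniq (s i) /\ (forall j, (j \in s i) = e i j).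

(* The set W of admissible words: no two adjacent classes both occur. *)
Definition in_W (T : finType) (e : rel T) (w : seq T) : Prop :=
  forall i j, e i j -> count_mem i w * count_mem j w = 0.

Definition admissible (T : finType) (e : rel T)
    (op : seq T -> T -> pref T -> seq T) : Prop :=
  forall (w : seq T) (v : T) (s : pref T), in_W e w -> is_pref e s ->
    (~~ has (e v) w -> op w v s = rcons w v) /\
    (has (e v) w -> exists2 k, k < size w &
        e (nth v w k) v /\ op w v s = take k w ++ drop k.+1 w).

Definition Q (T : Type) (op : seq T -> T -> pref T -> seq T)
    (z : seq T) (ss : seq (pref T)) : seq T :=
  foldl (fun w p => op w p.1 p.2) [::] (zip z ss).

Definition subadditive (T : finType) (op : seq T -> T -> pref T -> seq T)
    (supp : pref T -> Prop) : Prop :=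
  forall (z1 z2 : seq T) (s1 s2 : seq (pref T)),
    size s1 = size z1 -> size s2 = size z2 ->
    List.Forall supp s1 -> List.Forall supp s2 ->
    size (Q op (z1 ++ z2) (s1 ++ s2)) <= size (Q op z1 s1) + size (Q op z2 s2).

(* Main.v *)
Require Import Defs.
From Stdlib Require List.
From mathcomp Require Import all_boot.
From Stdlib Require Import Lia Classical.
From mathcomp Require Import zify.
Set Implicit Arguments. Unset Strict Implicit. Unset Printing Implicit Defensive.

Section Sem.
Variables (T : finType) (e : rel T) (op : seq T -> T -> pref T -> seq T) (supp : pref T -> Prop).
Hypothesis esym : symmetric e.
Hypothesis eirr : irreflexive e.
Hypothesis supp_pref : forall s, supp s -> is_pref e s.
Hypothesis adm : admissible e op.

Definition step (w : seq T) (p : T * pref T) := op w p.1 p.2.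

Lemma Forall_cat (P : pref T -> Prop) (s1 s2 : seq (pref T)) :
  List.Forall P (s1 ++ s2) <-> List.Forall P s1 /\ List.Forall P s2.
Proof.
elim: s1 => [|x s1 IH] /=; first by split=> // -[].
split.
- move=> H; have [H1 H2] := proj1 IH (List.Forall_inv_tail H).
  by split=> //; constructor=> //; exact: (List.Forall_inv H).
- move=> [H1 H2]; inversion H1; subst; constructor=> //; exact: (proj2 IH).
Qed.

Lemma inW_perm w w' : perm_eq w w' -> in_W e w -> in_W e w'.
Proof. move=> /permP Hp Hw i j Hij; rewrite -!Hp; exact: Hw. Qed.

Lemma inW_nil : in_W e [::].
Proof. by move=> i j _. Qed.

Lemma inW_notadj w y : in_W e w -> y \in w -> count (e y) w = 0.
Proof.
move=> Hw Hy; apply/eqP; rewrite -leqn0 leqNgt -has_count; apply/negP => /hasP [j Hj Hyj].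
have := Hw _ _ Hyj.
have : 0 < count_mem y w by rewrite lt0n; apply/eqP => /count_memPn; rewrite Hy.
have : 0 < count_mem j w by rewrite lt0n; apply/eqP => /count_memPn; rewrite Hj.
nia.
Qed.

Lemma count_mem_filter (p : pred T) i w :
  count_mem i (filter p w) = if p i then count_mem i w else 0.
Proof.
rewrite count_filter; case: ifP => Hp.
- apply: eq_count => x /=; case: eqP => // ->; by rewrite Hp.
- rewrite (eq_count (a2 := pred0)) ?count_pred0 // => x /=; case: eqP => // ->; by rewrite Hp.
Qed.

Lemma inW_step w y k : in_W e w -> in_W e (filter (predC (e y)) w ++ nseq k y).
Proof.
move=> Hw i j Hij; rewrite !count_cat !count_mem_filter !count_nseq /=.
have Hw' := Hw i j Hij.
case: (eqVneq i y) => [Hiy|Hiy]; case: (eqVneq j y) => [Hjy|Hjy].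
- by rewrite Hiy Hjy eirr in Hij.
- have Hyj : e y j by rewrite -Hiy.
  by rewrite Hyj /= !muln0.
- have Hyi : e y i by rewrite esym -Hjy.
  by rewrite Hyi /= !mul0n.
- rewrite /= !mul0n !addn0.
  by case: (e y i); case: (e y j) => //=; rewrite ?muln0 ?mul0n.
Qed.

Lemma inW_drop w k : in_W e w -> in_W e (take k w ++ drop k.+1 w).
Proof.
move=> Hw i j Hij.
case: (ltnP k (size w)) => Hk.
- have Hc : forall x, count_mem x (take k w ++ drop k.+1 w) <= count_mem x w.
    move=> x; rewrite -{3}(cat_take_drop k w) (drop_nth x Hk) !count_cat /=; lia.
  have := Hw i j Hij; have := Hc i; have := Hc j; nia.
- rewrite take_oversize // drop_oversize ?cats0; [exact: Hw | exact: leqW].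
Qed.

Lemma inW_rcons w v : in_W e w -> ~~ has (e v) w -> in_W e (rcons w v).
Proof.
move=> Hw Hh i j Hij; rewrite -cats1 !count_cat /=.
have Hnot : forall x, e v x -> count_mem x w = 0.
  move=> x Hx; apply/count_memPn; apply/negP => Hxw.
  by move/hasP: Hh; apply; exists x.
case: (eqVneq i v) => [Hiv|Hiv]; case: (eqVneq j v) => [Hjv|Hjv].
- by subst; rewrite eirr in Hij.
- subst; rewrite (Hnot j Hij) ?(eq_sym v j) ?(negbTE Hjv) /=; lia.
- subst; have Hvi : e v i by rewrite esym.
  rewrite (Hnot i Hvi) ?(eq_sym v i) ?(negbTE Hiv) /=; lia.
- rewrite ?(eq_sym v i) ?(eq_sym v j) ?(negbTE Hiv) ?(negbTE Hjv) /= !addn0; exact: Hw.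
Qed.

Lemma step_inW w v s : in_W e w -> supp s ->
  in_W e (op w v s) /\ (size (op w v s) = (size w).+1 \/ (size (op w v s)).+1 = size w).
Proof.
move=> Hw Hs; have [H1 H2] := adm v Hw (supp_pref Hs).
case Hh: (has (e v) w).
- have [k Hk [_ ->]] := H2 Hh; split; first exact: inW_drop.
  right; rewrite size_cat size_take size_drop Hk; lia.
- rewrite H1 ?Hh //; split; first by apply: inW_rcons; rewrite ?Hh.
  by left; rewrite size_rcons.
Qed.

Lemma parity z R ss : in_W e R -> size ss = size z -> List.Forall supp ss ->
  odd (size (foldl step R (zip z ss))) = odd (size R + size z).
Proof.
elim: z R ss => [|v z IH] R [|s ss] //= HR; first by rewrite addn0.
move=> [Hsz] HF; have H1 := List.Forall_inv HF; have H2 := List.Forall_inv_tail HF.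
have [HW Hsize] := step_inW v HR H1.
rewrite IH //; case: Hsize => [->|<-].
- by rewrite addSnnS.
- by rewrite addSn addnS /= negbK.
Qed.

Definition Det z (A B : seq T) := forall R ss, perm_eq R A -> size ss = size z ->
  List.Forall supp ss -> perm_eq (foldl step R (zip z ss)) B.

Lemma Det_nil A : Det [::] A A.
Proof. by move=> R [|s ss] HR. Qed.

Lemma Det_permr z A B B' : Det z A B -> perm_eq B B' -> Det z A B'.
Proof. move=> H HB R ss HR Hs HF; exact: perm_trans (H R ss HR Hs HF) HB. Qed.

Lemma Det_perml z A A' B : Det z A B -> perm_eq A' A -> Det z A' B.
Proof. move=> H HA R ss HR; apply: H; exact: perm_trans HR HA. Qed.

Lemma Det_cat z1 z2 A B C : Det z1 A B -> Det z2 B C -> Det (z1 ++ z2) A C.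
Proof.
move=> H1 H2 R ss HR; rewrite size_cat => Hs HF.
rewrite -(cat_take_drop (size z1) ss) in HF *.
have Ht : size (take (size z1) ss) = size z1 by rewrite size_take Hs; case: (size z2) => [|n]; rewrite ?addn0 ?ltnn ?minnn //= ifT //; lia.
rewrite zip_cat ?Ht // foldl_cat.
have [HF1 HF2] := proj1 (Forall_cat _ _ _) HF.
apply: H2 => //; first exact: H1.
by rewrite size_drop Hs addKn.
Qed.

Lemma feed K y R ss : in_W e R -> count (e y) R <= K -> size ss = K ->
  List.Forall supp ss ->
  perm_eq (foldl step R (zip (nseq K y) ss))
          (filter (predC (e y)) R ++ nseq (K - count (e y) R) y).
Proof.
elim: K R ss => [|K IH] R [|s0 ss] // HR HK Hs HF.
- rewrite leqn0 in HK; rewrite /= cats0.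
  have -> : filter (predC (e y)) R = R.
    apply/all_filterP; rewrite all_predC has_count (eqP HK) //.
  exact: perm_refl.
- have H1 := List.Forall_inv HF; have H2 := List.Forall_inv_tail HF.
  case: Hs => Hs.
  have [Hno Hyes] := adm y HR (supp_pref H1).
  have -> : foldl step R (zip (nseq K.+1 y) (s0 :: ss)) = foldl step (op R y s0) (zip (nseq K y) ss) by [].
  case Hh: (has (e y) R).
  + have [k Hk [He ->]] := Hyes Hh.
    have HRk : R = take k R ++ nth y R k :: drop k.+1 R by rewrite -drop_nth // cat_take_drop.
    have Hey : e y (nth y R k) by rewrite esym.
    have Hc : count (e y) R = (count (e y) (take k R ++ drop k.+1 R)).+1.
      by rewrite {1}HRk !count_cat /= Hey; lia.
    have Hf : filter (predC (e y)) R = filter (predC (e y)) (take k R ++ drop k.+1 R).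
      by rewrite {1}HRk !filter_cat /= Hey.
    apply: perm_trans (IH _ _ (inW_drop k HR) _ Hs H2) _; first by rewrite Hc in HK.
    by rewrite Hf Hc subSS perm_refl.
  + rewrite Hno ?Hh //.
    have Hc : count (e y) R = 0 by apply/eqP; rewrite -leqn0 leqNgt -has_count Hh.
    have Hc' : count (e y) (rcons R y) <= K by rewrite -cats1 count_cat Hc /= eirr.
    apply: perm_trans (IH _ _ (inW_rcons HR (negbT Hh)) Hc' Hs H2) _.
    rewrite -cats1 count_cat Hc /= eirr /= subn0 filter_cat /= eirr /= -catA /=.
    exact: perm_refl.
Qed.

Lemma Det_feed K y A : in_W e A -> count (e y) A <= K ->
  Det (nseq K y) A (filter (predC (e y)) A ++ nseq (K - count (e y) A) y).
Proof.
move=> HA HK R ss HR; rewrite size_nseq => Hs HF.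
have HcR : count (e y) R = count (e y) A by apply/permP.
have HWR : in_W e R by apply: inW_perm HA; rewrite perm_sym.
apply: perm_trans (feed HWR _ Hs HF) _; first by rewrite HcR.
by rewrite HcR perm_cat2r perm_filter.
Qed.

Lemma inW_nseq n v : in_W e (nseq n v).
Proof.
move=> i j Hij; rewrite !count_nseq /=.
case: (eqVneq v i) => [Hi|Hi]; case: (eqVneq v j) => [Hj|Hj] //=; rewrite ?mul0n ?muln0 //.
by subst; rewrite eirr in Hij.
Qed.

Lemma feed_homog j n v y R ss : e y v -> j <= n -> R = nseq n v -> size ss = j ->
  List.Forall supp ss -> foldl step R (zip (nseq j y) ss) = nseq (n - j) v.
Proof.
elim: j n R ss => [|j IH] n R [|s0 ss] // Hyv Hjn HR Hs HF; first by rewrite subn0.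
have H1 := List.Forall_inv HF; have H2 := List.Forall_inv_tail HF.
case: Hs => Hs.
case: n Hjn HR => [|n] // Hjn HR.
have HWR : in_W e R by rewrite HR; exact: inW_nseq.
have [Hno Hyes] := adm y HWR (supp_pref H1).
have Hh : has (e y) R by rewrite HR /= Hyv.
have -> : foldl step R (zip (nseq j.+1 y) (s0 :: ss)) = foldl step (op R y s0) (zip (nseq j y) ss) by [].
have [k Hk [_ ->]] := Hyes Hh.
rewrite (IH n) //.
rewrite HR size_nseq in Hk.
by rewrite HR take_nseq ?(ltnW Hk) // drop_nseq -nseqD; congr nseq; lia.
Qed.

Lemma Det_homog j n v y : e y v -> j <= n -> Det (nseq j y) (nseq n v) (nseq (n - j) v).
Proof.
move=> Hyv Hjn R ss HR; rewrite size_nseq => Hs HF.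
have HRe : R = nseq n v.
  have Hsz : size R = n by rewrite (perm_size HR) size_nseq.
  rewrite -Hsz; apply/all_pred1P; rewrite (eq_all_r (perm_mem HR)) all_pred1_nseq //.
rewrite (feed_homog Hyv Hjn HRe Hs HF); exact: perm_refl.
Qed.

Lemma Q_W u w s : in_W e (w ++ u) -> size s = size u -> List.Forall supp s ->
  foldl step w (zip u s) = w ++ u.
Proof.
elim: u w s => [|x u IH] w [|s0 s] // HW Hs HF; first by rewrite /= cats0.
have H1 := List.Forall_inv HF; have H2 := List.Forall_inv_tail HF.
case: Hs => Hs.
have HWw : in_W e w.
  move=> i j Hij; have := HW i j Hij; rewrite !count_cat; nia.
have Hh : ~~ has (e x) w.
  apply/hasP => -[y Hy Hxy]; have := HW x y Hxy.
  have : 0 < count_mem x (w ++ x :: u) by rewrite count_cat /= eqxx; lia.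
  have : 0 < count_mem y (w ++ x :: u).
    by rewrite count_cat lt0n; apply/eqP => /eqP; rewrite addn_eq0 => /andP [/eqP/count_memPn]; rewrite Hy.
  nia.
have [Hno _] := adm x HWw (supp_pref H1).
have -> : foldl step w (zip (x :: u) (s0 :: s)) = foldl step (op w x s0) (zip u s) by [].
rewrite Hno // IH -?cats1 -?catA //.
Qed.

Definition mK y (A : seq T * seq T) := maxn (count (e y) A.1) (count (e y) A.2).
Definition mst y (R : seq T) K := filter (predC (e y)) R ++ nseq (K - count (e y) R) y.
Definition mstep y (A : seq T * seq T) := (mst y A.1 (mK y A), mst y A.2 (mK y A)).
Definition Reach (A B : seq T * seq T) := exists z, Det z A.1 B.1 /\ Det z A.2 B.2.
Definition inv (A : seq T * seq T) :=
  [/\ in_W e A.1, in_W e A.2, (forall x, x \in A.1 -> x \notin A.2)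
    & exists k, size A.1 + size A.2 = k + k].

Lemma Reach_refl A : Reach A A.
Proof. by exists [::]; split; apply: Det_nil. Qed.

Lemma Reach_trans A B C : Reach A B -> Reach B C -> Reach A C.
Proof.
move=> [z1 [H1 H2]] [z2 [H3 H4]]; exists (z1 ++ z2); split; [exact: (Det_cat H1 H3) | exact: (Det_cat H2 H4)].
Qed.

Lemma Reach_perm A B B1 B2 : Reach A B -> perm_eq B.1 B1 -> perm_eq B.2 B2 -> Reach A (B1, B2).
Proof. move=> [z [H1 H2]] P1 P2; exists z; split; [exact: (Det_permr H1 P1) | exact: (Det_permr H2 P2)]. Qed.

Lemma Reach_swap A B : Reach A B -> Reach (A.2, A.1) (B.2, B.1).
Proof. by move=> [z [H1 H2]]; exists z. Qed.

Lemma Reach_mstep y A : inv A -> Reach A (mstep y A).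
Proof.
move=> [HW1 HW2 _ _]; exists (nseq (mK y A) y); rewrite /mstep /mst /=; split; apply: Det_feed => //.
- exact: leq_maxl.
- exact: leq_maxr.
Qed.

Lemma mem_mst y R K x : x \in mst y R K -> ((x \in R) && ~~ e y x) || (x == y).
Proof.
rewrite mem_cat mem_filter /= => /orP [/andP [-> ->] //|]; rewrite mem_nseq => /andP [_ ->].
by rewrite orbT.
Qed.

Lemma mst_in y R K x : x \in R -> ~~ e y x -> x \in mst y R K.
Proof. by move=> H1 H2; rewrite mem_cat mem_filter /= H1 H2. Qed.

Lemma inv_mstep y A : inv A -> inv (mstep y A).
Proof.
move=> [HW1 HW2 Hd [k Hk]]; split.
- exact: inW_step.
- exact: inW_step.
- rewrite /mstep /= => x.
  rewrite /mst !mem_cat !mem_filter !mem_nseq /= => /orP [/andP [Hx2 Hx1]|/andP [HK /eqP Hxy]].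
  + rewrite negb_or negb_and Hx2 /= (negbTE (Hd _ Hx1)) /=.
    apply/negP => /andP [HK /eqP Hxy]; subst x.
    have := inW_notadj HW1 Hx1; move: HK; rewrite /mK; set m1 := count _ _; set m2 := count _ _; lia.
  + subst x; rewrite negb_or; apply/andP; split.
    * apply/negP => /andP [_ Hy2]; have := inW_notadj HW2 Hy2; move: HK; rewrite /mK;
      set m1 := count _ _; set m2 := count _ _; lia.
    * rewrite eqxx andbT; move: HK; rewrite /mK;
      set m1 := count _ _; set m2 := count _ _; lia.
- exists (k + mK y A - count (e y) A.1 - count (e y) A.2).
  rewrite /mstep /mst /= !size_cat !size_filter !size_nseq.
  have := count_predC (e y) A.1; have := count_predC (e y) A.2; move: Hk; rewrite /mK; lia.
Qed.

Definition occ (A : seq T * seq T) : {set T} := [set x | (x \in A.1) || (x \in A.2)].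

Lemma occ_mstep y A : occ (mstep y A) \subset (occ A :\: [set v | e y v]) :|: [set y].
Proof.
apply/subsetP => x; rewrite !inE /= => /orP [] /mem_mst /orP [/andP [H1 H2]|->];
  rewrite ?orbT // H2 H1 ?orbT //.
Qed.

Lemma card_bound (U S N D : {set T}) p :
  S \subset (U :\: N) :|: [set p] -> D \subset U :&: N ->
  #|S| + #|D| <= #|U| + ((p \in S) && (p \notin U :\: N)).
Proof.
move=> HS HD; rewrite -(cardsID N U).
have HD' := subset_leq_card HD.
case H: ((p \in S) && (p \notin U :\: N)).
- have : #|S| <= #|(U :\: N) :|: [set p]| by exact: subset_leq_card.
  rewrite setUC cardsU1; case: (p \notin U :\: N); lia.
- have : S \subset U :\: N.
    apply/subsetP => x Hx; move/subsetP: HS => /(_ x Hx); rewrite inE => /orP [//|].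
    rewrite inE => /eqP Hxp; subst x; move: H; rewrite Hx /= => /negbFE //.
  move/subset_leq_card; lia.
Qed.

Lemma G1 p : forall x A, inv A -> x \in occ A -> path e x p -> last x p \in occ A ->
  x != last x p -> exists B, [/\ Reach A B, inv B & #|occ B| < #|occ A|].
Proof.
elim: p => [|p1 p IH] x A HA Hx Hp Hl Hne; first by rewrite /= eqxx in Hne.
move: Hp => /= /andP [Hxp1 Hp].
rewrite /= in Hl Hne.
have HRB := Reach_mstep p1 HA; have HiB := inv_mstep p1 HA.
have Hsub := occ_mstep p1 A.
have HxN : x \in occ A :&: [set v | e p1 v] by rewrite inE Hx inE esym.
have Hb1 := card_bound Hsub (D := [set x]) (p := p1); rewrite sub1set HxN cards1 in Hb1.
have {}Hb1 := Hb1 isT.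
case: (ltnP #|occ (mstep p1 A)| #|occ A|) => Hlt; first by exists (mstep p1 A).
case Hb: ((p1 \in occ (mstep p1 A)) && (p1 \notin occ A :\: [set v | e p1 v])) in Hb1; last first.
  by rewrite addn0 in Hb1; move: (leq_trans Hb1 Hlt); rewrite addn1 ltnn.
move/andP: Hb => [Hp1B Hp1U].
have Hp1A : p1 \notin occ A by move: Hp1U; rewrite !inE eirr /=.
have Hyne : p1 != last p1 p by apply/eqP => Hy; rewrite -Hy in Hl; rewrite Hl in Hp1A.
have Hny : ~~ e p1 (last p1 p).
  apply/negP => Hpy.
  have HD : [set x; last p1 p] \subset occ A :&: [set v | e p1 v].
    by rewrite subUset !sub1set HxN inE Hl inE Hpy.
  have := card_bound Hsub HD; rewrite cards2 Hne Hp1B Hp1U /= => H.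
  by move: (leq_trans (leq_add Hlt (leqnn 2)) H); rewrite leq_add2l.
have HyB : last p1 p \in occ (mstep p1 A).
  move: Hl; rewrite !inE /= => /orP [] H; [apply/orP; left | apply/orP; right]; exact: mst_in.
have [C [HRC HiC HltC]] := IH p1 _ HiB Hp1B Hp HyB Hyne.
exists C; split => //; first exact: Reach_trans HRB HRC.
have Hb : #|occ (mstep p1 A)| <= #|occ A| by rewrite -(leq_add2r 1).
exact: leq_trans HltC Hb.
Qed.


Lemma gather (Hconn : connected_graph e) n : forall A, #|occ A| <= n -> inv A ->
  exists B, [/\ Reach A B, inv B & #|occ B| <= 1].
Proof.
elim: n => [|n IH] A Hn HA.
- by exists A; split => //; [exact: Reach_refl | lia].
- case: (leqP #|occ A| 1) => H1; first by exists A; split => //; exact: Reach_refl.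
  have [x [y [Hx Hy Hxy]]] := card_gt1P H1.
  move/connectP: (Hconn x y) => [p Hp Hl].
  rewrite Hl in Hy Hxy.
  have [B [HRB HiB HltB]] := G1 HA Hx Hp Hy Hxy.
  have HBn : #|occ B| <= n by move: HltB Hn; lia.
  have [C [HRC HiC HC]] := IH B HBn HiB.
  by exists C; split => //; exact: Reach_trans HRB HRC.
Qed.

Lemma classify B (v0 : T) : inv B -> #|occ B| <= 1 ->
  exists v a, (exists k, a = k + k) /\ (B = (nseq a v, [::]) \/ B = ([::], nseq a v)).
Proof.
case: B => B1 B2 [HW1 HW2 Hd [k Hk]] Hc; rewrite /= in HW1 HW2 Hd Hk.
case E: (B1 ++ B2) => [|v r].
- have : size (B1 ++ B2) = 0 by rewrite E.
  rewrite size_cat => /eqP; rewrite addn_eq0 => /andP [/eqP/size0nil -> /eqP/size0nil ->].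
  by exists v0, 0; split; [exists 0 | left].
- have Hv : v \in occ (B1, B2) by rewrite inE /= -mem_cat E mem_head.
  have Hall : forall x, x \in occ (B1, B2) -> x = v.
    by move=> x Hx; apply: (card_le1_eqP Hc).
  have HB1 : B1 = nseq (size B1) v.
    by apply/all_pred1P/allP => x Hx; apply/eqP; apply: Hall; rewrite inE /= Hx.
  have HB2 : B2 = nseq (size B2) v.
    by apply/all_pred1P/allP => x Hx; apply/eqP; apply: Hall; rewrite inE /= Hx orbT.
  exists v, (size B1 + size B2); split; first by exists k.
  case: (posnP (size B1)) => H1.
  + right; rewrite H1 add0n HB2 size_nseq; congr pair; by apply/size0nil.
  + left; have Hv1 : v \in B1 by rewrite HB1 mem_nseq H1 eqxx.
    have H2 : size B2 = 0.
      apply/eqP; apply/negPn/negP => H2; have := Hd v Hv1; rewrite HB2 mem_nseq lt0n H2 eqxx.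
      by [].
    rewrite H2 addn0 HB1 size_nseq; congr pair; by apply/size0nil.
Qed.

Lemma Reach_mstepW y A : in_W e A.1 -> in_W e A.2 -> Reach A (mstep y A).
Proof.
move=> HW1 HW2; exists (nseq (mK y A) y); rewrite /mstep /mst /=; split; apply: Det_feed => //.
- exact: leq_maxl.
- exact: leq_maxr.
Qed.

Lemma pile_move a v y : e v y -> Reach (nseq a v, [::]) ([::], nseq a y).
Proof.
move=> Hvy; have Hyv : e y v by rewrite esym.
apply: Reach_perm (@Reach_mstepW y (nseq a v, [::]) (inW_nseq a v) inW_nil) _ _;
  rewrite /mstep /mst /mK /= ?count_nseq ?filter_nseq /= Hyv /= ?mul1n ?mul0n ?maxn0 ?subnn ?subn0 /=;
  exact: perm_refl.
Qed.

Lemma pile_walk a p : forall v, path e v p ->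
  Reach (nseq a v, [::]) (nseq a (last v p), [::]) \/
  Reach (nseq a v, [::]) ([::], nseq a (last v p)).
Proof.
elim: p => [|y p IH] v /=; first by left; exact: Reach_refl.
move=> /andP [Hvy Hp]; have H1 := pile_move a Hvy.
case: (IH y Hp) => H2.
- right; exact: Reach_trans H1 (Reach_swap H2).
- left; exact: Reach_trans H1 (Reach_swap H2).
Qed.

Lemma pile_split b v y : e v y -> Reach (nseq (b + b) v, [::]) (nseq b v, nseq b y).
Proof.
move=> Hvy; have Hyv : e y v by rewrite esym.
exists (nseq b y); split => /=.
- have := Det_homog (j := b) (n := b + b) Hyv (leq_addr _ _); by rewrite addnK.
- have := @Det_feed b y [::] inW_nil (leq0n b); rewrite /= subn0 => H; exact: H.
Qed.

Definition Sst (b : nat) (p0 : T) (f : bool) (a : T) : seq T * seq T := if f then (nseq b a, nseq b p0) else ([::], nseq b p0 ++ nseq b a).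

Lemma inW_two b p0 a : ~~ e p0 a -> in_W e (nseq b p0 ++ nseq b a).
Proof.
move=> Hn i j Hij; rewrite !count_cat !count_nseq /=.
have H1 : ~~ ((p0 == i) && (p0 == j)) by apply/andP => -[/eqP Hi /eqP Hj]; subst; rewrite eirr in Hij.
have H2 : ~~ ((a == i) && (a == j)) by apply/andP => -[/eqP Hi /eqP Hj]; subst; rewrite eirr in Hij.
have H3 : ~~ ((p0 == i) && (a == j)) by apply/andP => -[/eqP Hi /eqP Hj]; subst; rewrite Hij in Hn.
have H4 : ~~ ((a == i) && (p0 == j)).
  apply/andP => -[/eqP Hi /eqP Hj]; subst; move: Hn; rewrite esym Hij.
  by [].
move: H1 H2 H3 H4; case: (p0 == i); case: (p0 == j); case: (a == i); case: (a == j) => //= _ _ _ _;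
  rewrite ?mul1n ?mul0n ?addn0 ?add0n ?muln0 //.
Qed.

Lemma cyc_step b p0 a y f : e a y -> ~~ e y p0 -> (f = false -> ~~ e p0 a) ->
  Reach (Sst b p0 f a) (Sst b p0 (~~ f) y).
Proof.
move=> Hay Hyp Hf; have Hya : e y a by rewrite esym.
have Hpy : e p0 y = false by rewrite esym; exact: negbTE.
case: f Hf => Hf /=.
- apply: Reach_perm (@Reach_mstepW y (nseq b a, nseq b p0) (inW_nseq b a) (inW_nseq b p0)) _ _;
  rewrite /mstep /mst /mK /= ?count_nseq ?filter_nseq /= Hya (negbTE Hyp) /= ?mul1n ?mul0n ?maxn0 ?subnn ?subn0 /=;
  exact: perm_refl.
- apply: Reach_perm (@Reach_mstepW y ([::], nseq b p0 ++ nseq b a) inW_nil (inW_two b (Hf erefl))) _ _;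
  rewrite /mstep /mst /mK /= ?count_cat ?count_nseq ?filter_cat ?filter_nseq /= Hya (negbTE Hyp) /= ?mul1n ?mul0n ?add0n ?max0n ?subnn ?subn0 ?cats0 /=;
  exact: perm_refl.
Qed.

Lemma cyc_run b p0 r : forall a f, (f = false -> ~~ e p0 a) -> path e a r ->
  all (fun w => ~~ e w p0) r ->
  Reach (Sst b p0 f a) (Sst b p0 (f (+) odd (size r)) (last a r)).
Proof.
elim: r => [|y r IH] a f Hf /=; first by rewrite addbF => _ _; exact: Reach_refl.
move=> /andP [Hay Hp] /andP [Hyp Hall].
have H1 := cyc_step b Hay Hyp Hf.
have Hf' : ~~ f = false -> ~~ e p0 y by move=> _; rewrite esym.
have H2 := IH y (~~ f) Hf' Hp Hall.
rewrite addbN -addNb; exact: Reach_trans H1 H2.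
Qed.

Lemma core b p0 p1 r x : e p0 p1 -> path e p1 r -> e (last p1 r) x -> e x p0 ->
  ~~ odd (size r) -> all (fun w => ~~ e w p0) r ->
  Reach (nseq (b + b) p1, [::]) ([::], [::]).
Proof.
move=> H01 Hp Hlx Hx0 Hodd Hall.
have H10 : e p1 p0 by rewrite esym.
have S1 := pile_split b H10.
have S2 := @cyc_run b p0 r p1 true (fun H => ltac:(discriminate)) Hp Hall.
rewrite /Sst (negbTE Hodd) /= in S2.
apply: Reach_trans (Reach_trans S1 S2) _.
have Hxl : e x (last p1 r) by rewrite esym.
have Hxp : e x p0 by [].
apply: Reach_perm (@Reach_mstepW x (nseq b (last p1 r), nseq b p0) (inW_nseq _ _) (inW_nseq _ _)) _ _;
  rewrite /mstep /mst /mK /= ?count_nseq ?filter_nseq /= Hxl Hxp /= ?mul1n ?mul0n ?maxnn ?subnn /=;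
  exact: perm_refl.
Qed.

Lemma pile_to_empty (Hconn : connected_graph e) b p0 p1 r x v :
  e p0 p1 -> path e p1 r -> e (last p1 r) x -> e x p0 ->
  ~~ odd (size r) -> all (fun w => ~~ e w p0) r ->
  Reach (nseq (b + b) v, [::]) ([::], [::]).
Proof.
move=> H01 Hp Hlx Hx0 Hodd Hall.
have C := core b H01 Hp Hlx Hx0 Hodd Hall.
move/connectP: (Hconn v p1) => [q Hq Hl].
case: (pile_walk (b + b) Hq) => H; rewrite -Hl in H.
- exact: Reach_trans H C.
- exact: Reach_trans H (Reach_swap C).
Qed.

Lemma erase_all (Hconn : connected_graph e) p0 p1 r x u :
  e p0 p1 -> path e p1 r -> e (last p1 r) x -> e x p0 ->
  ~~ odd (size r) -> all (fun w => ~~ e w p0) r ->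
  in_W e u -> ~~ odd (size u) -> Reach (u, [::]) ([::], [::]).
Proof.
move=> H01 Hp Hlx Hx0 Hodd Hall Hu Hsu.
have HA : inv (u, [::]).
  split; [exact: Hu | exact: inW_nil | by [] | ].
  exists (size u)./2; rewrite addn0 -{1}(odd_double_half (size u)) (negbTE Hsu) add0n -addnn //.
have [B [HRB HiB HcB]] := gather Hconn (leqnn _) HA.
have [v [a [[k ->] HB]]] := classify p0 HiB HcB.
have P := @pile_to_empty Hconn k p0 p1 r x v H01 Hp Hlx Hx0 Hodd Hall.
case: HB => HB; rewrite HB in HRB.
- exact: Reach_trans HRB P.
- exact: Reach_trans HRB (Reach_swap P).
Qed.
End Sem.
Section Cyc.
Variables (T : finType) (e : rel T).
Hypothesis esym : symmetric e.
Hypothesis eirr : irreflexive e.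

Lemma min_good n : forall c, size c <= n -> cycle e c -> odd (size c) ->
  exists p0 p1 r x, e p0 p1 /\ path e p1 r /\ e (last p1 r) x /\ e x p0 /\
     ~~ odd (size r) /\ all (fun w => ~~ e w p0) r.
Proof.
elim: n => [|n IH] c Hn Hc Ho.
- by move: Hn Hc Ho; case: c.
- move: Hn Hc Ho; case: c => [|p0 [|p1 q]] //=.
  + by rewrite andbT eirr.
  + case/lastP: q => [|r x] Hn; first by [].
    rewrite rcons_path last_rcons rcons_path => /andP [H01 /andP [/andP [Hp Hlx] Hx0]].
    rewrite size_rcons negbK => Hr.
    case Hall: (all (fun w => ~~ e w p0) r).
      by exists p0, p1, r, x; do !split.
    move/negbT/allPn: Hall => [w Hw]; rewrite negbK => Hw0.
    case/splitPr: Hw Hp Hlx Hr Hn => r1 r2 Hp Hlx Hr Hn.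
    rewrite cat_path /= in Hp; move/and3P: Hp => [Hp1 Hlw Hp2].
    rewrite last_cat /= in Hlx.
    rewrite size_cat /= in Hr Hn.
    case Ho1: (odd (size r1)).
    + (* r2 even: use c2 = p0 :: w :: rcons r2 x *)
      apply: (IH (p0 :: w :: rcons r2 x)).
      * by rewrite /= size_rcons; rewrite size_rcons size_cat /= in Hn; lia.
      * by rewrite /= rcons_path last_rcons rcons_path /= esym Hw0 Hp2 Hlx Hx0.
      * by rewrite /= size_rcons /=; move: Hr; rewrite addnS /= oddD Ho1 /= negbK => ->.
    + apply: (IH (p0 :: p1 :: rcons r1 w)).
      * by rewrite /= size_rcons; rewrite size_rcons size_cat /= in Hn; lia.
      * by rewrite /= rcons_path last_rcons rcons_path /= H01 Hp1 Hlw Hw0.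
      * by rewrite /= size_rcons /= Ho1.
Qed.

Definition eH (p q : T * bool) := e p.1 q.1 && (q.2 == ~~ p.2).

Lemma eH_sym : symmetric eH.
Proof. by case=> a b [c d]; rewrite /eH /= esym; case: b; case: d. Qed.

Lemma lift p : forall a b, path e a p -> connect eH (a, b) (last a p, b (+) odd (size p)).
Proof.
elim: p => [|y p IH] a b /=; first by rewrite addbF => _; exact: connect0.
move=> /andP [Hay Hp].
apply: connect_trans (connect1 (_ : eH (a, b) (y, ~~ b))) _; first by rewrite /eH /= Hay eqxx.
by have := IH y (~~ b) Hp; rewrite addNb addbN.
Qed.

Lemma proj q : forall a b, path eH (a, b) q ->
  [/\ path e a (map fst q), last a (map fst q) = (last (a, b) q).1
    & (last (a, b) q).2 = b (+) odd (size q)].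
Proof.
elim: q => [|[c d] q IH] a b /=; first by rewrite addbF.
move=> /andP [/andP [/= Hac /eqP Hd] Hq]; subst d.
have [H1 H2 H3] := IH c (~~ b) Hq.
by split; rewrite ?Hac ?H1 ?H2 ?H3 // addNb addbN.
Qed.

Lemma odd_cycle_of y : connect eH (y, false) (y, true) -> exists c, cycle e c && odd (size c).
Proof.
move/connectP => [q Hq Hl].
have [H1 H2 H3] := proj Hq.
rewrite -Hl /= in H2 H3.
move: H1 H2; rewrite -(size_map fst) in H3.
case/lastP: (map fst q) H3 => [|p' y'] //= H3; rewrite last_rcons => H1 H2; subst y'.
by exists (y :: p'); rewrite /= H1 /=; rewrite size_rcons /= in H3; rewrite -H3.
Qed.

Lemma odd_cycle (Hconn : connected_graph e) : ~ bipartite e ->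
  exists c, cycle e c && odd (size c).
Proof.
move=> Hnb; apply: NNPP => Hno; apply: Hnb.
have Hny : forall y, ~ connect eH (y, false) (y, true).
  by move=> y H; apply: Hno; exact: odd_cycle_of H.
case: (pickP (T := T) predT) => [a0 _|Hnone]; last first.
  by exists (fun _ => true) => x; have := Hnone x.
exists (fun x => connect eH (a0, false) (x, false)) => x y Hxy.
have HsymC := sym_connect_sym eH_sym.
case Hx: (connect _ _ (x, false)); case Hy: (connect _ _ (y, false)) => //=.
- have Hy' : connect eH (a0, false) (y, true).
    apply: connect_trans Hx (connect1 _); by rewrite /eH /= Hxy.
  case: (Hny y); apply: connect_trans Hy'; by rewrite HsymC.
- move/connectP: (Hconn a0 x) => [p Hp Hl].
  have := lift false Hp; rewrite -Hl /=.
  case: (odd (size p)) => /= Hc; last by rewrite Hc in Hx.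
  have : connect eH (a0, false) (y, false).
    apply: connect_trans Hc (connect1 _); by rewrite /eH /= Hxy.
  by rewrite Hy.
Qed.

Lemma good_cycle (Hconn : connected_graph e) : ~ bipartite e ->
  exists p0 p1 r x, e p0 p1 /\ path e p1 r /\ e (last p1 r) x /\ e x p0 /\
     ~~ odd (size r) /\ all (fun w => ~~ e w p0) r.
Proof.
move=> Hnb; have [c /andP [Hc Ho]] := odd_cycle Hconn Hnb.
exact: (min_good (leqnn _) Hc Ho).
Qed.
End Cyc.


Lemma nil_of_perm (T : eqType) (s : seq T) : perm_eq s [::] -> s = [::].
Proof. by move/perm_size => /= /size0nil. Qed.

Lemma Forall_nseq (A : Type) (P : A -> Prop) (a : A) n : P a -> List.Forall P (nseq n a).
Proof. by move=> Ha; elim: n => //= n IH; constructor. Qed.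

Theorem mainTheorem8 (T : finType) (e : rel T)
    (op : seq T -> T -> pref T -> seq T) (supp : pref T -> Prop) :
  simple_graph e -> connected_graph e -> ~ bipartite e ->
  (forall s, supp s -> is_pref e s) -> (exists s, supp s) ->
  admissible e op -> subadditive op supp ->
  forall u : seq T, in_W e u -> ~~ odd (size u) ->
  exists z : seq T, ~~ odd (size z) /\
    forall (s' s : seq (pref T)),
      size s' = size z -> List.Forall supp s' ->
      size s = size u -> List.Forall supp s ->
      Q op z s' = [::] /\ Q op (u ++ z) (s ++ s') = [::].
Proof.
move=> [esym eirr] Hconn Hnb Hsupp [s0 Hs0] Hadm _ u Hu Hodd.
have [p0 [p1 [r [x [H01 [Hp [Hlx [Hx0 [Hr Hall]]]]]]]]] := good_cycle esym eirr Hconn Hnb.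
have [z [D1 D2]] := erase_all esym eirr Hsupp Hadm Hconn H01 Hp Hlx Hx0 Hr Hall Hu Hodd.
exists z; split.
- have Hf := Forall_nseq (size z) Hs0.
  have Hsz : size (nseq (size z) s0) = size z by rewrite size_nseq.
  have := D2 [::] _ (perm_refl _) Hsz Hf; move/nil_of_perm => H.
  have := parity esym eirr Hsupp Hadm (@inW_nil _ e) Hsz Hf; rewrite H /= => <-; by [].
- move=> s' s Hs' Hf' Hs Hf; split.
  + exact: (nil_of_perm (D2 [::] s' (perm_refl _) Hs' Hf')).
  + rewrite /Q zip_cat ?Hs // foldl_cat.
    have -> : foldl (fun w p => op w p.1 p.2) [::] (zip u s) = u.
      exact: (@Q_W T e op supp Hsupp Hadm u [::] s Hu Hs Hf).
    exact: (nil_of_perm (D1 u s' (perm_refl _) Hs' Hf')).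
Qed.
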